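(* For any positive integers $m$ and $n$ the following three identities hold: \begin{align*} &\zeta^\star(\{2\}^m,1)\cdot\zeta^\star(\{ 2 \}^n,1) =\zeta^\star(\{2\}^m,1,\{2\}^n,1)+\zeta^\star(\{2\}^n,1,\{2\}^m,1), \\ &\zeta^\star(\{2\}^m,1)\cdot\zeta^\star(\{2\}^n) =\zeta^\star(\{2\}^m,1,\{2\}^n)+\zeta^\star(\{2\}^{n-1},3,\{2\}^m), \\ &\zeta^\star(\{2\}^m)\cdot\zeta^\star(\{2\}^n) =\zeta^\star(\{2\}^{m-1},3,\{2\}^{n-1},1) +\zeta^\star(\{2\}^{n-1},3,\{2\}^{m-1},1). \end{align*}
   Context: For positive integers $k_1,\ldots,k_r$ with $k_1\geq 2$, the multiple zeta-star value is $\zeta^\star(k_1,\ldots,k_r)=\sum_{m_1\geq m_2\geq\cdots\geq m_r\geq 1} m_1^{-k_1}\cdots m_r^{-k_r}$. The notation $\{2\}^n$ stands for the string $2,\ldots,2$ of $n$ copies of $2$ (empty if $n=0$). *)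

(* Defs.v *)
From Stdlib Require Import Reals List.
From Coquelicot Require Import Coquelicot.
Import ListNotations.
Open Scope R_scope.

(* Truncated multiple zeta-star sum:
   zs_trunc [k1;...;kr] N = sum_{N >= m1 >= m2 >= ... >= mr >= 1} m1^-k1 ... mr^-kr,
   with zs_trunc [] N = 1. *)
Fixpoint zs_trunc (ks : list nat) (N : nat) : R :=
  match ks with
  | nil => 1
  | k :: ks' =>
      (fix go (n : nat) : R :=
         match n with
         | O => 0
         | S n' => go n' + / (INR n ^ k) * zs_trunc ks' n
         end) N
  end.

Definition zeta_star (ks : list nat) : R := real (Lim_seq (zs_trunc ks)).

Definition twos (n : nat) : list nat := repeat 2%nat n.

(* Main.v *)
Require Import Defs.
From Stdlib Require Import Reals List Lra Lia.
From Coquelicot Require Import Coquelicot.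
Import ListNotations.
Open Scope R_scope.


Fixpoint sumk (n : nat) (f : nat -> R) : R :=
  match n with O => 0 | S n' => sumk n' f + f (S n') end.

Lemma sumk_ext n f g : (forall k, (1 <= k <= n)%nat -> f k = g k) -> sumk n f = sumk n g.
Proof. induction n; intros H; simpl; auto. rewrite IHn by (intros; apply H; lia). rewrite H by lia; auto. Qed.

Lemma sumk_plus n f g : sumk n (fun k => f k + g k) = sumk n f + sumk n g.
Proof. induction n; simpl; [lra|rewrite IHn; lra]. Qed.

Lemma sumk_scal n c f : sumk n (fun k => c * f k) = c * sumk n f.
Proof. induction n; simpl; [lra|rewrite IHn; lra]. Qed.

Lemma sumk_le n f g : (forall k, (1 <= k <= n)%nat -> f k <= g k) -> sumk n f <= sumk n g.
Proof. induction n; intros H; simpl; [lra|]. assert (H1 := H (S n) ltac:(lia)).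
  assert (sumk n f <= sumk n g) by (apply IHn; intros; apply H; lia). lra. Qed.

Lemma sumk_abs n f : Rabs (sumk n f) <= sumk n (fun k => Rabs (f k)).
Proof. induction n; simpl. rewrite Rabs_R0; lra.
  eapply Rle_trans; [apply Rabs_triang|]. lra. Qed.

Fixpoint Dc (N k : nat) : R :=
  match k with O => 1 | S k' => Dc N k' * (INR N - INR k') / (INR N + INR k' + 1) end.

Lemma D_S N k : Dc N (S k) = Dc N k * (INR N - INR k) / (INR N + INR k + 1).
Proof. reflexivity. Qed.

Definition h (N k : nat) : R := Dc N k * (INR N + INR k).

Lemma pos1 N k : 0 < INR N + INR k + 1.
Proof. pose proof (pos_INR N); pose proof (pos_INR k); lra. Qed.

Lemma h_S N k : h N (S k) = Dc N k * (INR N - INR k).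
Proof. unfold h; rewrite !D_S. rewrite S_INR. pose proof (pos1 N k). field. lra. Qed.

Lemma h_diff N k : h N k - h N (S k) = 2 * INR k * Dc N k.
Proof. rewrite h_S; unfold h; ring. Qed.

Lemma h_sum N k : h N k + h N (S k) = 2 * INR N * Dc N k.
Proof. rewrite h_S; unfold h; ring. Qed.

Lemma D_SN N : Dc N (S N) = 0.
Proof. rewrite D_S. replace (INR N - INR N) with 0 by ring. rewrite Rmult_0_r; unfold Rdiv; ring. Qed.

Lemma h_SN N : h N (S N) = 0.
Proof. unfold h; rewrite D_SN; ring. Qed.

Lemma D_rel N k : Dc N k * INR (S N) ^ 2 = Dc (S N) k * (INR (S N) ^ 2 - INR k ^ 2).
Proof.
  induction k. simpl; ring.
  rewrite !D_S.
  assert (H1 := pos1 N k). assert (H2 := pos1 (S N) k).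
  transitivity ((Dc N k * INR (S N) ^ 2) * (INR N - INR k) / (INR N + INR k + 1)).
  { unfold Rdiv; ring. }
  rewrite IHk. rewrite !S_INR in *. field. lra.
Qed.

Lemma D_bounds N k : (1 <= N)%nat -> (k <= N)%nat ->
  0 <= Dc N k <= 1 /\ 1 - Dc N k <= INR k ^ 2 / INR N.
Proof.
  intros HN. induction k; intros Hk.
  - simpl. split; [lra|]. assert (0 < INR N) by (apply lt_0_INR; lia). 
    replace (0*1/INR N) with 0 by (field; lra). lra.
  - destruct IHk as [[Ha Hb] Hc]; [lia|].
    assert (HNk : INR k < INR N) by (apply lt_INR; lia).
    assert (0 <= INR k) by apply pos_INR.
    assert (HN0 : 0 < INR N) by (apply lt_0_INR; lia).
    rewrite !D_S. rewrite S_INR.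
    assert (F1: 0 <= (INR N - INR k) / (INR N + INR k + 1) <= 1).
    { split. apply Rdiv_le_0_compat; lra.
      apply Rmult_le_reg_r with (INR N + INR k + 1); [lra|].
      unfold Rdiv; rewrite Rmult_assoc, Rinv_l; lra. }
    assert (E : Dc N k * (INR N - INR k) / (INR N + INR k + 1) = Dc N k * ((INR N - INR k) / (INR N + INR k + 1))) by (unfold Rdiv; ring).
    destruct F1 as [F1a F1b]. rewrite E. split.
    + split. apply Rmult_le_pos; lra.
      apply Rle_trans with (1*1); [apply Rmult_le_compat; lra | lra].
    + assert (E2 : 1 - Dc N k * ((INR N - INR k) / (INR N + INR k + 1)) =
         (1 - Dc N k) + Dc N k * ((2 * INR k + 1) / (INR N + INR k + 1))) by (field; lra).
      rewrite E2.
      assert (Dc N k * ((2 * INR k + 1) / (INR N + INR k + 1)) <= (2 * INR k + 1) / INR N).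
      { apply Rle_trans with ((2 * INR k + 1) / (INR N + INR k + 1)).
        rewrite <- (Rmult_1_l ((2 * INR k + 1) / (INR N + INR k + 1))) at 2.
        apply Rmult_le_compat_r; [apply Rdiv_le_0_compat; lra|lra].
        unfold Rdiv. apply Rmult_le_compat_l; [lra|]. apply Rinv_le_contravar; lra. }
      assert (E3 : (INR k + 1) ^ 2 / INR N = INR k ^ 2 / INR N + (2 * INR k + 1) / INR N) by (field; lra).
      lra.
Qed.

Definition rep (ks : list nat) (psi : nat -> R) :=
  forall N, (1 <= N)%nat -> zs_trunc ks N = sumk N (fun k => Dc N k * psi k).

Lemma zs_S a ks n : zs_trunc (a :: ks) (S n) = zs_trunc (a :: ks) n + / (INR (S n) ^ a) * zs_trunc ks (S n).
Proof. reflexivity. Qed.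
Lemma zs_0 a ks : zs_trunc (a :: ks) 0 = 0.
Proof. reflexivity. Qed.

Lemma sumk_lin M f g c : sumk M (fun l => f l + c * g l) = sumk M f + c * sumk M g.
Proof. rewrite sumk_plus, sumk_scal; auto. Qed.

Lemma sumk_SN N phi : sumk N (fun k => Dc N k * phi k) = sumk (S N) (fun k => Dc N k * phi k).
Proof. change (sumk (S N) ?f) with (sumk N f + f (S N)). cbv beta. rewrite D_SN. ring. Qed.

Lemma D_diff n k : Dc (S n) k - Dc n k = Dc (S n) k * INR k ^ 2 / INR (S n) ^ 2.
Proof.
  assert (0 < INR (S n)) by (apply lt_0_INR; lia).
  assert (E : Dc n k = Dc n k * INR (S n) ^ 2 / INR (S n) ^ 2) by (field; lra).
  rewrite E, D_rel. field. lra.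
Qed.

Lemma prepend a ks psi phi : rep ks psi ->
  (forall n, sumk (S n) (fun k => (Dc (S n) k - Dc n k) * phi k) =
             / (INR (S n) ^ a) * sumk (S n) (fun k => Dc (S n) k * psi k)) ->
  rep (a :: ks) phi.
Proof.
  intros Hr Hs N _. induction N. { rewrite zs_0; reflexivity. }
  rewrite zs_S, IHN, Hr by lia. rewrite <- Hs, sumk_SN, <- sumk_plus.
  apply sumk_ext; intros; ring.
Qed.

Definition P2 (psi : nat -> R) k := psi k / INR k ^ 2.

Lemma rep_P2 ks psi : rep ks psi -> rep (2%nat :: ks) (P2 psi).
Proof.
  intros Hr. apply prepend with psi; auto. intros n.
  assert (0 < INR (S n)) by (apply lt_0_INR; lia).
  rewrite <- sumk_scal. apply sumk_ext. intros k Hk.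
  assert (0 < INR k) by (apply lt_0_INR; lia).
  rewrite D_diff. unfold P2. field. lra.
Qed.

Definition P1 (psi : nat -> R) k := (psi k + 2 * sumk (k - 1) psi) / INR k.

Lemma Lsw1 N psi M :
  sumk M (fun k => INR k * Dc N k * (psi k + 2 * sumk (k - 1) psi)) =
  sumk M (fun l => psi l * (INR l * Dc N l + h N (S l) - h N (S M))).
Proof.
  induction M. reflexivity.
  change (sumk (S M) ?f) with (sumk M f + f (S M)).
  rewrite IHM. replace (S M - 1)%nat with M by lia.
  transitivity (sumk M (fun l => psi l * (INR l * Dc N l + h N (S l) - h N (S M))
     + (h N (S M) - h N (S (S M))) * psi l) + psi (S M) * (INR (S M) * Dc N (S M) + h N (S (S M)) - h N (S (S M)))).
  { rewrite sumk_lin, h_diff. ring. }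
  f_equal. apply sumk_ext; intros; ring.
Qed.

Lemma rep_P1 ks psi : rep ks psi -> rep (1%nat :: ks) (P1 psi).
Proof.
  intros Hr. apply prepend with psi; auto. intros n.
  set (N := S n).
  assert (0 < INR N) by (apply lt_0_INR; lia).
  transitivity (/ INR N ^ 2 * sumk N (fun k => INR k * Dc N k * (psi k + 2 * sumk (k - 1) psi))).
  { rewrite <- sumk_scal. apply sumk_ext. intros k Hk.
    assert (0 < INR k) by (apply lt_0_INR; lia).
    unfold N; rewrite D_diff; fold N. unfold P1. field. lra. }
  rewrite Lsw1, h_SN.
  transitivity (/ INR N ^ 2 * (INR N * sumk N (fun k => Dc N k * psi k))).
  { f_equal. rewrite <- sumk_scal. apply sumk_ext; intros. rewrite h_S. ring. }
  field. lra.
Qed.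

Lemma m1sq k : (-1) ^ k * (-1) ^ k = 1.
Proof. induction k; simpl; [ring|]. transitivity ((-1)^k * (-1)^k); [ring|auto]. Qed.

Definition P3 (psi : nat -> R) k :=
  (psi k / INR k + 2 * (-1) ^ k * sumk (k - 1) (fun l => (-1) ^ l * psi l / INR l)) / INR k ^ 2.

Lemma Lsw3 N psi M : (1 <= N)%nat ->
  sumk M (fun k => Dc N k * (psi k / INR k + 2 * (-1) ^ k * sumk (k - 1) (fun l => (-1) ^ l * psi l / INR l))) =
  sumk M (fun l => psi l / INR l * (Dc N l - h N (S l) / INR N + (-1) ^ M * (-1) ^ l * h N (S M) / INR N)).
Proof.
  intros HN. assert (0 < INR N) by (apply lt_0_INR; lia).
  induction M. reflexivity.
  change (sumk (S M) ?f) with (sumk M f + f (S M)).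
  rewrite IHM. replace (S M - 1)%nat with M by lia.
  transitivity (sumk M (fun l => psi l / INR l * (Dc N l - h N (S l) / INR N + (-1) ^ M * (-1) ^ l * h N (S M) / INR N)
     + (- (-1) ^ M * 2 * Dc N (S M)) * ((-1) ^ l * psi l / INR l)) +
     psi (S M) / INR (S M) * (Dc N (S M) - h N (S (S M)) / INR N + (-1) ^ (S M) * (-1) ^ (S M) * h N (S (S M)) / INR N)).
  { rewrite sumk_lin, m1sq. simpl pow. field. split; lra || (apply not_0_INR; lia). }
  f_equal. apply sumk_ext; intros l Hl. assert (0 < INR l) by (apply lt_0_INR; lia).
  assert (E := h_sum N (S M)). simpl pow.
  assert (E2 : h N (S (S M)) = 2 * INR N * Dc N (S M) - h N (S M)) by lra. rewrite E2.
  field. lra.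
Qed.

Lemma rep_P3 ks psi : rep ks psi -> rep (3%nat :: ks) (P3 psi).
Proof.
  intros Hr. apply prepend with psi; auto. intros n.
  set (N := S n).
  assert (0 < INR N) by (apply lt_0_INR; lia).
  transitivity (/ INR N ^ 2 * sumk N (fun k => Dc N k * (psi k / INR k + 2 * (-1) ^ k * sumk (k - 1) (fun l => (-1) ^ l * psi l / INR l)))).
  { rewrite <- sumk_scal. apply sumk_ext. intros k Hk.
    assert (0 < INR k) by (apply lt_0_INR; lia).
    unfold N; rewrite D_diff; fold N. unfold P3. field. lra. }
  rewrite Lsw3 by (unfold N; lia). rewrite h_SN.
  transitivity (/ INR N ^ 2 * (/ INR N * sumk N (fun k => Dc N k * psi k))).
  { f_equal. rewrite <- sumk_scal. apply sumk_ext; intros l Hl.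
    assert (0 < INR l) by (apply lt_0_INR; lia).
    rewrite h_S. field. lra. }
  field. lra.
Qed.

Definition e (k : nat) : R := -2 * (-1) ^ k.

Lemma base_sum N M : INR N * sumk M (fun k => Dc N k * e k) = h N 1 - (-1) ^ M * h N (S M).
Proof.
  induction M. simpl. ring.
  change (sumk (S M) ?f) with (sumk M f + f (S M)).
  rewrite Rmult_plus_distr_l, IHM. assert (E := h_sum N (S M)). unfold e. simpl pow.
  assert (E2 : h N (S (S M)) = 2 * INR N * Dc N (S M) - h N (S M)) by lra. rewrite E2. ring.
Qed.

Lemma rep_nil : rep [] e.
Proof.
  intros N HN. assert (0 < INR N) by (apply lt_0_INR; lia).
  assert (B := base_sum N N). rewrite h_SN in B.
  assert (h N 1 = INR N). { unfold h. rewrite D_S. simpl. field. lra. }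
  simpl zs_trunc. apply Rmult_eq_reg_l with (INR N); lra.
Qed.

Lemma rep_twos m ks psi : rep ks psi -> rep (twos m ++ ks) (fun k => psi k * / (INR k ^ 2) ^ m).
Proof.
  intros Hr. induction m.
  - intros N HN. simpl. rewrite Hr by auto. apply sumk_ext; intros; simpl; field.
  - intros N HN. change (twos (S m) ++ ks) with (2%nat :: (twos m ++ ks)). rewrite (rep_P2 _ _ IHm N HN). apply sumk_ext; intros k Hk.
    assert (0 < INR k) by (apply lt_0_INR; lia). unfold P2. change ((INR k ^ 2) ^ S m) with (INR k ^ 2 * (INR k ^ 2) ^ m). rewrite Rinv_mult. unfold Rdiv. ring.
Qed.

Definition ps1 (f g : nat -> R) k := f k * g k / 2 + f k * sumk (k - 1) g.

Lemma stuffle f g N : sumk N f * sumk N g = sumk N (ps1 f g) + sumk N (ps1 g f).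
Proof.
  induction N. simpl; ring.
  change (sumk (S ?N) ?f) with (sumk N f + f (S N)).
  cbv beta.
  assert (Ep1 : ps1 f g (S N) = f (S N) * g (S N) / 2 + f (S N) * sumk N g) by (unfold ps1; replace (S N - 1)%nat with N by lia; reflexivity).
  assert (Ep2 : ps1 g f (S N) = g (S N) * f (S N) / 2 + g (S N) * sumk N f) by (unfold ps1; replace (S N - 1)%nat with N by lia; reflexivity).
  rewrite Ep1, Ep2.
  assert (E : (sumk N f + f (S N)) * (sumk N g + g (S N)) = sumk N f * sumk N g + f (S N) * sumk N g + g (S N) * sumk N f + f (S N) * g (S N)) by ring.
  rewrite E, IHN. field.
Qed.

Lemma sum_inv_sq_aux K : (1 <= K)%nat -> sumk K (fun l => / INR l ^ 2) <= 2 - / INR K.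
Proof.
  induction K; intros HK. lia.
  destruct K. simpl. lra.
  change (sumk (S (S K)) ?f) with (sumk (S K) f + f (S (S K))).
  assert (IH := IHK ltac:(lia)). cbv beta.
  assert (0 < INR (S K)) by (apply lt_0_INR; lia).
  rewrite (S_INR (S K)).
  assert (/ (INR (S K) + 1) ^ 2 <= / INR (S K) - / (INR (S K) + 1)).
  { assert (E : / INR (S K) - / (INR (S K) + 1) = / (INR (S K) * (INR (S K) + 1))) by (field; lra).
    rewrite E. apply Rinv_le_contravar. apply Rmult_lt_0_compat; lra. replace ((INR (S K) + 1) ^ 2) with ((INR (S K)+1)*(INR (S K)+1)) by ring. nra. }
  lra.
Qed.

Lemma sum_inv_sq K : sumk K (fun l => / INR l ^ 2) <= 2.
Proof.
  destruct K. simpl; lra.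
  assert (H := sum_inv_sq_aux (S K) ltac:(lia)).
  assert (0 < / INR (S K)) by (apply Rinv_0_lt_compat, lt_0_INR; lia). lra.
Qed.

Definition tt N k := (1 - Dc N k) / INR k ^ 2.

Lemma tt_bounds N k : (1 <= k <= N)%nat -> 0 <= tt N k <= / INR N /\ tt N k <= / INR k ^ 2.
Proof.
  intros Hk. destruct (D_bounds N k ltac:(lia) ltac:(lia)) as [[H1 H2] H3].
  assert (0 < INR k) by (apply lt_0_INR; lia).
  assert (0 < INR N) by (apply lt_0_INR; lia).
  unfold tt. split; [split|].
  - apply Rdiv_le_0_compat; [lra|]. apply pow_lt; lra.
  - apply Rmult_le_reg_r with (INR k ^ 2). apply pow_lt; lra.
    unfold Rdiv. rewrite Rmult_assoc, Rinv_l by (apply pow_nonzero; lra).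
    replace (/ INR N * INR k ^ 2) with (INR k ^ 2 / INR N) by (unfold Rdiv; ring). lra.
  - unfold Rdiv. rewrite <- (Rmult_1_l (/ INR k ^ 2)) at 2. apply Rmult_le_compat_r.
    apply Rlt_le, Rinv_0_lt_compat, pow_lt; lra. lra.
Qed.

Lemma tt_sum1 N K : (K <= N)%nat -> sumk K (tt N) <= INR K / INR N.
Proof.
  induction K; intros HK. simpl. unfold Rdiv; lra.
  change (sumk (S K) ?f) with (sumk K f + f (S K)).
  destruct (tt_bounds N (S K) ltac:(lia)) as [[_ H1] _].
  rewrite S_INR. assert (IH := IHK ltac:(lia)).
  assert (E : (INR K + 1) / INR N = INR K / INR N + / INR N) by (unfold Rdiv; ring). lra.
Qed.

Lemma tt_sum2 N M K : (K <= N)%nat -> (1 <= M <= K)%nat ->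
  sumk K (tt N) <= INR M / INR N + / INR M - / INR K.
Proof.
  induction K; intros HK HM. lia.
  destruct (Nat.eq_dec M (S K)) as [->|HMK].
  - assert (H := tt_sum1 N (S K) HK). lra.
  - change (sumk (S K) ?f) with (sumk K f + f (S K)).
    assert (IH := IHK ltac:(lia) ltac:(lia)).
    destruct (tt_bounds N (S K) ltac:(lia)) as [_ H1].
    assert (0 < INR K) by (apply lt_0_INR; lia).
    rewrite S_INR in *.
    assert (/ (INR K + 1) ^ 2 <= / INR K - / (INR K + 1)).
    { assert (E : / INR K - / (INR K + 1) = / (INR K * (INR K + 1))) by (field; lra).
      rewrite E. apply Rinv_le_contravar. apply Rmult_lt_0_compat; lra. replace ((INR K + 1) ^ 2) with ((INR K+1)*(INR K+1)) by ring. nra. }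
    lra.
Qed.

Lemma B_conv (C : R) (phi S : nat -> R) : 0 <= C ->
  (forall k, (1 <= k)%nat -> Rabs (phi k) <= C / INR k ^ 2) ->
  (forall N, S N = sumk N (fun k => Dc N k * phi k)) ->
  (forall N, S N <= S (Datatypes.S N)) ->
  exists L : R, is_lim_seq S L /\ is_lim_seq (fun N => sumk N phi) L.
Proof.
  intros HC Hphi HS Hmon.
  assert (Hb : forall N, S N <= 2 * C).
  { intros N. rewrite HS. eapply Rle_trans; [apply Rle_abs|].
    eapply Rle_trans; [apply sumk_abs|].
    apply Rle_trans with (sumk N (fun k => C * / INR k ^ 2)).
    - apply sumk_le. intros k Hk.
      destruct (D_bounds N k ltac:(lia) ltac:(lia)) as [[H1 H2] _].
      rewrite Rabs_mult, Rabs_pos_eq by lra.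
      apply Rle_trans with (1 * Rabs (phi k)). apply Rmult_le_compat_r; [apply Rabs_pos|lra].
      rewrite Rmult_1_l. apply Hphi; lia.
    - rewrite sumk_scal. assert (H := sum_inv_sq N). nra. }
  destruct (ex_finite_lim_seq_incr S (2 * C) Hmon Hb) as [L HL].
  exists L. split; auto.
  assert (Hd : is_lim_seq (fun N => S N - sumk N phi) 0).
  { apply is_lim_seq_Reals. intros eps Heps.
    set (C' := C + 1).
    assert (HC' : 0 < C') by (unfold C'; lra).
    destruct (archimed_cor1 (eps / (2 * C'))) as [M [HM1 HM2]].
    { apply Rdiv_lt_0_compat; lra. }
    assert (HMp : 0 < INR M) by (apply lt_0_INR; lia).
    destruct (archimed_cor1 (eps / (2 * C' * INR M))) as [N1 [HN1 HN2]].
    { apply Rdiv_lt_0_compat; [lra|]. apply Rmult_lt_0_compat; lra. }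
    exists (N1 + M)%nat. intros N HN. unfold R_dist.
    assert (HNp : 0 < INR N) by (apply lt_0_INR; lia).
    assert (HN1p : 0 < INR N1) by (apply lt_0_INR; lia).
    rewrite Rminus_0_r, HS.
    assert (E : sumk N (fun k => Dc N k * phi k) - sumk N phi = sumk N (fun k => (Dc N k - 1) * phi k)).
    { rewrite <- (Rplus_0_r (sumk N (fun k => Dc N k * phi k))).
      replace (sumk N (fun k => Dc N k * phi k) + 0 - sumk N phi) with
        (sumk N (fun k => Dc N k * phi k) + (-1) * sumk N phi) by ring.
      rewrite <- sumk_scal, <- sumk_plus. apply sumk_ext; intros; ring. }
    rewrite E. eapply Rle_lt_trans; [apply sumk_abs|].
    apply Rle_lt_trans with (sumk N (fun k => C * tt N k)).
    { apply sumk_le. intros k Hk.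
      destruct (D_bounds N k ltac:(lia) ltac:(lia)) as [[H1 H2] _].
      assert (0 < INR k) by (apply lt_0_INR; lia).
      rewrite Rabs_mult. rewrite Rabs_left1 by lra.
      assert (Hp := Hphi k ltac:(lia)).
      unfold tt. 
      apply Rle_trans with ((1 - Dc N k) * (C / INR k ^ 2)).
      { replace (- (Dc N k - 1)) with (1 - Dc N k) by ring. apply Rmult_le_compat_l; lra. }
      right; unfold Rdiv; ring. }
    rewrite sumk_scal.
    assert (HT := tt_sum2 N M N ltac:(lia) ltac:(lia)).
    assert (0 < / INR N) by (apply Rinv_0_lt_compat; lra).
    assert (HMN : INR M / INR N <= INR M / INR N1).
    { unfold Rdiv. apply Rmult_le_compat_l; [lra|]. apply Rinv_le_contravar; [lra|]. apply le_INR; lia. }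
    assert (HMN1 : INR M / INR N1 < eps / (2 * C')).
    { unfold Rdiv. apply Rmult_lt_reg_r with (/ INR M). apply Rinv_0_lt_compat; lra.
      replace (INR M * / INR N1 * / INR M) with (/ INR N1) by (field; lra).
      replace (eps * / (2 * C') * / INR M) with (eps / (2 * C' * INR M)) by (field; lra). lra. }
    assert (Hsum : sumk N (tt N) < eps / C').
    { assert (E2 : eps / C' = eps / (2 * C') + eps / (2 * C')) by (field; lra). lra. }
    assert (Hs0 : 0 <= sumk N (tt N)).
    { apply Rle_trans with (sumk N (fun _ => 0)). clear; induction N; simpl; lra.
      apply sumk_le. intros k Hk. apply (tt_bounds N k Hk). }
    apply Rle_lt_trans with (C' * sumk N (tt N)).
    { apply Rmult_le_compat_r; unfold C'; lra. }
    apply Rmult_lt_reg_l with (/ C'). apply Rinv_0_lt_compat; lra.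
    replace (/ C' * (C' * sumk N (tt N))) with (sumk N (tt N)) by (field; lra).
    replace (/ C' * eps) with (eps / C') by (unfold Rdiv; ring). lra. }
  assert (H := is_lim_seq_minus' _ _ _ _ HL Hd).
  eapply is_lim_seq_ext; [|replace L with (L - 0) by ring; exact H].
  intros N; simpl; ring.
Qed.

Lemma ps1_bound f g : (forall k, (1 <= k)%nat -> Rabs (f k) <= 2 / INR k ^ 2) ->
  (forall k, (1 <= k)%nat -> Rabs (g k) <= 2 / INR k ^ 2) ->
  forall k, (1 <= k)%nat -> Rabs (ps1 f g k) <= 10 / INR k ^ 2.
Proof.
  intros Hf Hg k Hk. unfold ps1.
  assert (0 < INR k) by (apply lt_0_INR; lia).
  assert (1 <= INR k) by (apply (le_INR 1); lia).
  assert (Hk2 : 1 <= INR k ^ 2) by (simpl; nra).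
  assert (Hi : 0 < / INR k ^ 2 <= 1).
  { split. apply Rinv_0_lt_compat; lra. rewrite <- Rinv_1. apply Rinv_le_contravar; lra. }
  assert (HS : Rabs (sumk (k - 1) g) <= 4).
  { eapply Rle_trans; [apply sumk_abs|].
    apply Rle_trans with (sumk (k - 1) (fun l => 2 * / INR l ^ 2)).
    apply sumk_le; intros; apply Hg; lia.
    rewrite sumk_scal. assert (Hq := sum_inv_sq (k - 1)). lra. }
  assert (F := Hf k Hk). assert (G := Hg k Hk).
  unfold Rdiv in *.
  eapply Rle_trans; [apply Rabs_triang|]. rewrite !Rabs_mult.
  assert (0 <= Rabs (f k)) by apply Rabs_pos. assert (0 <= Rabs (g k)) by apply Rabs_pos.
  assert (0 <= Rabs (sumk (k-1) g)) by apply Rabs_pos.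
  rewrite Rabs_inv, (Rabs_pos_eq 2) by lra.
  assert (Rabs (f k) * Rabs (g k) * / 2 <= 2 * / INR k ^ 2).
  { apply Rle_trans with (2 * / INR k ^ 2 * (2 * 1) * / 2). 
    apply Rmult_le_compat_r; [lra|]. apply Rmult_le_compat; nra. lra. }
  assert (Rabs (f k) * Rabs (sumk (k - 1) g) <= 2 * / INR k ^ 2 * 4).
  { apply Rmult_le_compat; lra. }
  lra.
Qed.

Theorem abstract (f g : nat -> R) (Sf Sg S1 S2 : nat -> R) :
  (forall k, (1 <= k)%nat -> Rabs (f k) <= 2 / INR k ^ 2) ->
  (forall k, (1 <= k)%nat -> Rabs (g k) <= 2 / INR k ^ 2) ->
  (forall N, Sf N = sumk N (fun k => Dc N k * f k)) ->
  (forall N, Sg N = sumk N (fun k => Dc N k * g k)) ->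
  (forall N, S1 N = sumk N (fun k => Dc N k * ps1 f g k)) ->
  (forall N, S2 N = sumk N (fun k => Dc N k * ps1 g f k)) ->
  (forall N, Sf N <= Sf (S N)) -> (forall N, Sg N <= Sg (S N)) ->
  (forall N, S1 N <= S1 (S N)) -> (forall N, S2 N <= S2 (S N)) ->
  real (Lim_seq Sf) * real (Lim_seq Sg) = real (Lim_seq S1) + real (Lim_seq S2).
Proof.
  intros Hf Hg Ef Eg E1 E2 Mf Mg M1 M2.
  assert (Hf' : forall k, (1 <= k)%nat -> Rabs (f k) <= 10 / INR k ^ 2).
  { intros k Hk. assert (0 < INR k) by (apply lt_0_INR; lia).
    assert (0 < / INR k ^2) by (apply Rinv_0_lt_compat, pow_lt; lra).
    eapply Rle_trans; [apply Hf; auto|]. unfold Rdiv; nra. }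
  assert (Hg' : forall k, (1 <= k)%nat -> Rabs (g k) <= 10 / INR k ^ 2).
  { intros k Hk. assert (0 < INR k) by (apply lt_0_INR; lia).
    assert (0 < / INR k ^2) by (apply Rinv_0_lt_compat, pow_lt; lra).
    eapply Rle_trans; [apply Hg; auto|]. unfold Rdiv; nra. }
  destruct (B_conv 10 f Sf ltac:(lra) Hf' Ef Mf) as [Lf [Hf1 Hf2]].
  destruct (B_conv 10 g Sg ltac:(lra) Hg' Eg Mg) as [Lg [Hg1 Hg2]].
  destruct (B_conv 10 _ S1 ltac:(lra) (ps1_bound f g Hf Hg) E1 M1) as [L1 [H11 H12]].
  destruct (B_conv 10 _ S2 ltac:(lra) (ps1_bound g f Hg Hf) E2 M2) as [L2 [H21 H22]].
  rewrite (is_lim_seq_unique _ _ Hf1), (is_lim_seq_unique _ _ Hg1),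
          (is_lim_seq_unique _ _ H11), (is_lim_seq_unique _ _ H21). simpl.
  assert (A := is_lim_seq_mult' _ _ _ _ Hf2 Hg2).
  assert (B := is_lim_seq_plus' _ _ _ _ H12 H22).
  assert (C := is_lim_seq_ext _ _ _ (fun N => stuffle f g N) A).
  assert (U := is_lim_seq_unique _ _ B). assert (V := is_lim_seq_unique _ _ C).
  cbv beta in U, V. rewrite V in U. injection U; auto.
Qed.

Lemma zs_nonneg ks N : 0 <= zs_trunc ks N.
Proof.
  revert N. induction ks as [|a ks IH]; intros N. simpl; lra.
  induction N. rewrite zs_0; lra.
  rewrite zs_S. assert (0 < INR (S N)) by (apply lt_0_INR; lia).
  assert (0 < / INR (S N) ^ a) by (apply Rinv_0_lt_compat, pow_lt; lra).
  assert (H2 := IH (S N)). nra.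
Qed.

Lemma zs_mono ks N : zs_trunc ks N <= zs_trunc ks (S N).
Proof.
  destruct ks as [|a ks]. simpl; lra.
  rewrite zs_S. assert (0 < INR (S N)) by (apply lt_0_INR; lia).
  assert (0 < / INR (S N) ^ a) by (apply Rinv_0_lt_compat, pow_lt; lra).
  assert (H2 := zs_nonneg ks (S N)). nra.
Qed.

Lemma rep_all a ks psi : rep (a :: ks) psi -> forall N, zs_trunc (a :: ks) N = sumk N (fun k => Dc N k * psi k).
Proof. intros H [|N]. reflexivity. apply H; lia. Qed.

Lemma rep_ext ks psi phi : rep ks psi -> (forall k, (1 <= k)%nat -> psi k = phi k) -> rep ks phi.
Proof. intros H E N HN. rewrite H by auto. apply sumk_ext; intros k Hk. rewrite E by lia; auto. Qed.

Ltac fld := field; repeat split; try lra; try (repeat apply pow_nonzero; lra).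

Definition al m k := / (INR k ^ 2) ^ m.
Definition F1 m k := 2 * / INR k * al m k.
Definition G n k := e k * al n k.

Lemma e_sum K : e (S K) + 2 * sumk K e = 2.
Proof.
  induction K. unfold e; simpl; ring.
  change (sumk (S K) e) with (sumk K e + e (S K)).
  assert (e (S (S K)) = - e (S K)) by (unfold e; simpl; ring). lra.
Qed.

Lemma al_S m k : (1 <= k)%nat -> al (S m) k = al m k / INR k ^ 2.
Proof. intros Hk. assert (0 < INR k) by (apply lt_0_INR; lia). unfold al.
  change ((INR k ^ 2) ^ S m) with (INR k ^ 2 * (INR k ^ 2) ^ m). rewrite Rinv_mult. unfold Rdiv; ring. Qed.

Lemma al_bound m k : (1 <= k)%nat -> 0 < al m k <= 1.
Proof.
  intros Hk. assert (1 <= INR k) by (apply (le_INR 1); lia).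
  assert (1 <= INR k ^ 2) by (simpl; nra).
  assert (1 <= (INR k ^ 2) ^ m) by (apply pow_R1_Rle; lra).
  unfold al. split. apply Rinv_0_lt_compat; lra. rewrite <- Rinv_1. apply Rinv_le_contravar; lra.
Qed.

Lemma rep_F1 m : rep (twos m ++ [1%nat]) (F1 m).
Proof.
  eapply rep_ext. apply rep_twos, rep_P1, rep_nil.
  intros k Hk. destruct k. lia. unfold P1, F1, al.
  replace (S k - 1)%nat with k by lia. rewrite e_sum. set (x := INR (S k)). unfold Rdiv. ring.
Qed.

Lemma rep_G n : rep (twos n) (G n).
Proof.
  rewrite <- (app_nil_r (twos n)). eapply rep_ext. apply rep_twos, rep_nil.
  intros; unfold G, al; ring.
Qed.

Lemma sumk_F1 m k : sumk (k - 1) (fun k => P1 e k * / (INR k ^ 2) ^ m) = sumk (k - 1) (F1 m).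
Proof.
  apply sumk_ext. intros l Hl. destruct l. lia. unfold P1, F1, al.
  replace (S l - 1)%nat with l by lia. rewrite e_sum. set (x := INR (S l)). unfold Rdiv. ring.
Qed.

Lemma rep_id1 m n : rep (twos m ++ [1%nat] ++ twos n ++ [1%nat]) (ps1 (F1 m) (F1 n)).
Proof.
  change ([1%nat] ++ twos n ++ [1%nat]) with (1%nat :: (twos n ++ [1%nat])).
  eapply rep_ext. apply rep_twos, rep_P1, rep_F1.
  intros k Hk. assert (0 < INR k) by (apply lt_0_INR; lia).
  unfold P1, ps1, F1, al. fld.
Qed.

Lemma rep_id2a m n : rep (twos m ++ [1%nat] ++ twos n) (ps1 (F1 m) (G n)).
Proof.
  change ([1%nat] ++ twos n) with (1%nat :: twos n).
  eapply rep_ext. apply rep_twos, rep_P1, rep_G.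
  intros k Hk. assert (0 < INR k) by (apply lt_0_INR; lia).
  unfold P1, ps1, F1, al. fld.
Qed.

Lemma rep_id2b m n : rep (twos n ++ [3%nat] ++ twos m) (ps1 (G (S n)) (F1 m)).
Proof.
  change ([3%nat] ++ twos m) with (3%nat :: twos m).
  eapply rep_ext. apply rep_twos, rep_P3, rep_G.
  intros k Hk. assert (0 < INR k) by (apply lt_0_INR; lia).
  assert (E : sumk (k - 1) (fun l => (-1) ^ l * G m l / INR l) = - sumk (k - 1) (F1 m)).
  { rewrite <- (Rmult_1_l (sumk (k - 1) (F1 m))), Ropp_mult_distr_l, <- sumk_scal.
    apply sumk_ext. intros l Hl. assert (0 < INR l) by (apply lt_0_INR; lia).
    unfold G, F1, e. 
    transitivity (-2 * ((-1) ^ l * (-1) ^ l) * al m l / INR l). { field. lra. }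
    rewrite m1sq. field. lra. }
  unfold P3. rewrite E. unfold ps1, G. rewrite al_S by lia. unfold F1, al, e. fld.
Qed.

Lemma rep_id3 m n : rep (twos m ++ [3%nat] ++ twos n ++ [1%nat]) (ps1 (G (S m)) (G (S n))).
Proof.
  change ([3%nat] ++ twos n ++ [1%nat]) with (3%nat :: (twos n ++ [1%nat])).
  eapply rep_ext. apply rep_twos, rep_P3, rep_F1.
  intros k Hk. assert (0 < INR k) by (apply lt_0_INR; lia).
  assert (E : sumk (k - 1) (fun l => (-1) ^ l * F1 n l / INR l) = - sumk (k - 1) (G (S n))).
  { rewrite <- (Rmult_1_l (sumk (k - 1) (G (S n)))), Ropp_mult_distr_l, <- sumk_scal.
    apply sumk_ext. intros l Hl. assert (0 < INR l) by (apply lt_0_INR; lia).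
    unfold G, F1, e. rewrite al_S by lia. unfold al. fld. }
  assert (GG : G (S m) k * G (S n) k = 4 * al (S m) k * al (S n) k).
  { unfold G, e. transitivity (4 * ((-1) ^ k * (-1) ^ k) * al (S m) k * al (S n) k). ring. rewrite m1sq; ring. }
  unfold P3. rewrite E. unfold ps1. rewrite GG. unfold G. rewrite !al_S by lia. unfold F1, al, e. fld.
Qed.

Lemma F1_bound m k : (1 <= m)%nat -> (1 <= k)%nat -> Rabs (F1 m k) <= 2 / INR k ^ 2.
Proof.
  intros Hm Hk. destruct m. lia.
  assert (1 <= INR k) by (apply (le_INR 1); lia).
  destruct (al_bound m k Hk).
  unfold F1. rewrite al_S by lia.
  assert (0 < / INR k <= 1). { split. apply Rinv_0_lt_compat; lra. rewrite <- Rinv_1. apply Rinv_le_contravar; lra. }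
  assert (0 < / INR k ^ 2) by (apply Rinv_0_lt_compat, pow_lt; lra).
  rewrite Rabs_pos_eq. 2: { unfold Rdiv. repeat apply Rmult_le_pos; lra. }
  unfold Rdiv. set (a := / INR k) in *. set (c := / INR k ^ 2) in *.
  assert (a * al m k <= 1) by nra. nra.
Qed.

Lemma G_bound n k : (1 <= n)%nat -> (1 <= k)%nat -> Rabs (G n k) <= 2 / INR k ^ 2.
Proof.
  intros Hn Hk. destruct n. lia.
  assert (1 <= INR k) by (apply (le_INR 1); lia).
  destruct (al_bound n k Hk).
  unfold G. rewrite al_S by lia.
  assert (0 < / INR k ^ 2) by (apply Rinv_0_lt_compat, pow_lt; lra).
  rewrite Rabs_mult. assert (Hek : Rabs (e k) = 2).
  { unfold e. rewrite Rabs_mult, pow_1_abs, Rabs_left by lra. lra. }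
  rewrite Hek, (Rabs_pos_eq (al n k / INR k ^ 2)). 2: { unfold Rdiv; nra. }
  unfold Rdiv. nra.
Qed.

Theorem theorem1p1 (m n : nat) (hm : (1 <= m)%nat) (hn : (1 <= n)%nat) :
  zeta_star (twos m ++ [1%nat]) * zeta_star (twos n ++ [1%nat])
    = zeta_star (twos m ++ [1%nat] ++ twos n ++ [1%nat])
      + zeta_star (twos n ++ [1%nat] ++ twos m ++ [1%nat])
  /\
  zeta_star (twos m ++ [1%nat]) * zeta_star (twos n)
    = zeta_star (twos m ++ [1%nat] ++ twos n)
      + zeta_star (twos (n - 1) ++ [3%nat] ++ twos m)
  /\
  zeta_star (twos m) * zeta_star (twos n)
    = zeta_star (twos (m - 1) ++ [3%nat] ++ twos (n - 1) ++ [1%nat])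
      + zeta_star (twos (n - 1) ++ [3%nat] ++ twos (m - 1) ++ [1%nat]).
Proof.
  destruct m as [|m]; [lia|]. destruct n as [|n]; [lia|].
  replace (S m - 1)%nat with m by lia. replace (S n - 1)%nat with n by lia.
  unfold zeta_star.
  assert (Mo : forall ks N, zs_trunc ks N <= zs_trunc ks (S N)) by apply zs_mono.
  split; [|split].
  - apply (abstract (F1 (S m)) (F1 (S n))); try (intros; apply F1_bound; lia); try apply Mo.
    + exact (rep_all 2%nat _ _ (rep_F1 (S m))).
    + exact (rep_all 2%nat _ _ (rep_F1 (S n))).
    + exact (rep_all 2%nat _ _ (rep_id1 (S m) (S n))).
    + exact (rep_all 2%nat _ _ (rep_id1 (S n) (S m))).
  - apply (abstract (F1 (S m)) (G (S n))); try (intros; apply F1_bound; lia);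
      try (intros; apply G_bound; lia); try apply Mo.
    + exact (rep_all 2%nat _ _ (rep_F1 (S m))).
    + exact (rep_all 2%nat _ _ (rep_G (S n))).
    + exact (rep_all 2%nat _ _ (rep_id2a (S m) (S n))).
    + destruct n.
      * exact (rep_all 3%nat _ _ (rep_id2b (S m) 0)).
      * exact (rep_all 2%nat _ _ (rep_id2b (S m) (S n))).
  - apply (abstract (G (S m)) (G (S n))); try (intros; apply G_bound; lia); try apply Mo.
    + exact (rep_all 2%nat _ _ (rep_G (S m))).
    + exact (rep_all 2%nat _ _ (rep_G (S n))).
    + destruct m.
      * exact (rep_all 3%nat _ _ (rep_id3 0 n)).
      * exact (rep_all 2%nat _ _ (rep_id3 (S m) n)).
    + destruct n.
      * exact (rep_all 3%nat _ _ (rep_id3 0 m)).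
      * exact (rep_all 2%nat _ _ (rep_id3 (S n) m)).
Qed.
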